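(* Let $V$ be a finite-dimensional vector space over a field $\mathbb K$ of characteristic $\neq 2$, let $\mathcal S\subseteq V$, and let $\mathcal H\subset V$ be a linear hyperplane. Suppose that $\mathcal S'=\mathcal S\cap\mathcal H$ is a perfect subset of $\mathcal H$ and that $\mathcal S\setminus\mathcal S'$ spans $V$. Then $\mathcal S$ is perfect in $V$.
   Context: A subset $\mathcal P$ of a vector space $W$ of finite dimension $n$ over a field of characteristic $\neq2$ is perfect (in $W$) if $\{v\otimes v\}_{v\in\mathcal P}$ spans the $\binom{n+1}{2}$-dimensional space of all symmetric tensors in $W\otimes W$. *)

(* Defs.v *)
(* V is coordinatized as 'rV[K]_n; subspaces are row spaces of
   matrices (mxalgebra); W (x) W is realized inside 'M[K]_n = V (x) V, with
   u (x) v  represented by  u^T *m v. *)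
From HB Require Import structures.
From mathcomp Require Import all_boot all_order all_algebra.
Set Implicit Arguments. Unset Strict Implicit. Unset Printing Implicit Defensive.
Import GRing.Theory.
Local Open Scope ring_scope.

Definition in_span (K : fieldType) (T : lmodType K) (P : T -> Prop) (x : T) : Prop :=
  exists (s : seq T) (c : seq K),
    (forall i, (i < size s)%N -> P (nth 0 s i)) /\
    x = \sum_(i < size s) c`_i *: nth 0 s i.

(* M is a symmetric tensor of W (x) W, W the row space of the matrix W *)
Definition sym_tensor (K : fieldType) (n m : nat) (W : 'M[K]_(m, n)) (M : 'M[K]_n) : Prop :=
  M^T = M /\ (M <= W)%MS /\ (M^T <= W)%MS.

Definition perfect (K : fieldType) (n m : nat) (P : 'rV[K]_n -> Prop) (W : 'M[K]_(m, n)) : Prop :=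
  (forall v, P v -> (v <= W)%MS) /\
  forall M : 'M[K]_n, sym_tensor W M ->
    in_span (fun A : 'M[K]_n => exists v, P v /\ A = v^T *m v) M.

(* Main.v *)
Require Import Defs.
From HB Require Import structures.
From mathcomp Require Import all_boot all_order all_algebra.
Set Implicit Arguments. Unset Strict Implicit. Unset Printing Implicit Defensive.
Import GRing.Theory.
Local Open Scope ring_scope.

Section Span.
Variables (K : fieldType) (T : lmodType K).

Definition lspan (P : T -> Prop) (x : T) :=
  exists l : seq (K * T), (forall p, p \in l -> P p.2) /\ x = \sum_(p <- l) p.1 *: p.2.

Lemma in_spanE P x : in_span P x <-> lspan P x.
Proof.
split.
  move=> [s [c [Hs ->]]].
  exists [seq (c`_i, nth 0 s i) | i <- iota 0 (size s)]; split.
    by move=> p /mapP [i]; rewrite mem_iota add0n => /Hs Hi ->.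
  by rewrite big_map -(big_mkord xpredT (fun i => c`_i *: nth 0 s i)) /index_iota subn0.
move=> [l [Hl ->]].
exists (map snd l), (map fst l); split.
  move=> i; rewrite size_map => Hi.
  by rewrite (nth_map (0,0)) //; apply: Hl; rewrite mem_nth.
rewrite (big_nth (0,0)) big_mkord size_map; apply: eq_bigr => i _.
by rewrite !(nth_map (0,0)).
Qed.

Lemma lspan0 P : lspan P 0.
Proof. by exists [::]; split => //; rewrite big_nil. Qed.

Lemma lspanD P x y : lspan P x -> lspan P y -> lspan P (x + y).
Proof.
move=> [l1 [H1 ->]] [l2 [H2 ->]]; exists (l1 ++ l2); split; last by rewrite big_cat.
by move=> p; rewrite mem_cat => /orP [/H1|/H2].
Qed.

Lemma lspanZ P k x : lspan P x -> lspan P (k *: x).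
Proof.
move=> [l [Hl ->]]; exists [seq (k * p.1, p.2) | p <- l]; split.
  by move=> p /mapP [q /Hl Hq ->].
by rewrite big_map scaler_sumr; apply: eq_bigr => p _; rewrite scalerA.
Qed.

Lemma lspanN P x : lspan P x -> lspan P (- x).
Proof. by move=> /(lspanZ (-1)); rewrite scaleN1r. Qed.

Lemma lspanB P x y : lspan P x -> lspan P y -> lspan P (x - y).
Proof. by move=> Hx /lspanN; apply: lspanD. Qed.

Lemma lspan1 (P : T -> Prop) x : P x -> lspan P x.
Proof. by move=> Px; exists [:: (1, x)]; split; [move=> p; rewrite inE => /eqP -> | rewrite big_seq1 scale1r]. Qed.

Lemma lspanW (P Q : T -> Prop) x : (forall y, P y -> Q y) -> lspan P x -> lspan Q x.
Proof. by move=> PQ [l [Hl ->]]; exists l; split => // p /Hl /PQ. Qed.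

End Span.

Theorem lemma2p1 (K : fieldType) (n : nat) (S : 'rV[K]_n -> Prop) (H : 'M[K]_n) :
  ~~ (2%N \in [pchar K]) ->
  (0 < n)%N -> \rank H = n.-1 ->
  perfect (fun v => S v /\ (v <= H)%MS) H ->
  (forall x : 'rV[K]_n, in_span (fun v => S v /\ ~ (v <= H)%MS) x) ->
  perfect S (1%:M : 'M[K]_n).
Proof.
move=> _ n0 rH [_ hperf] hspan.
split; first by move=> v _; apply: submx1.
set gen := fun A : 'M[K]_n => exists v, S v /\ A = v^T *m v.
have TH : forall M, sym_tensor H M -> lspan gen M.
  move=> M /hperf /in_spanE; apply: lspanW => A [v [[Sv _] ->]]; by exists v.
have [u [Su uH]] : exists u, S u /\ ~ (u <= H)%MS.
  have [s [c [Hs E]]] := hspan (const_mx 1).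
  case: (ltnP 0 (size s)) => [s0|]; first by move: (Hs 0%N s0) => [? ?]; eexists; split; eauto.
  rewrite leqn0 => /eqP s0; move: E; rewrite s0 big_ord0 => /matrixP /(_ 0 (Ordinal n0)).
  by rewrite !mxE => /eqP; rewrite oner_eq0.
have full : forall m (A : 'M[K]_(m, n)), (A <= H + u)%MS.
  move=> m A; apply: submx_full; rewrite /row_full eqn_leq rank_leq_col /=.
  have : (H < H + u)%MS.
    rewrite ltmxE addsmxSl /=; apply/negP => Hu; apply: uH.
    exact: submx_trans (addsmxSr H u) Hu.
  by move=> /rank_ltmx; rewrite rH prednK.
have dec : forall w : 'rV[K]_n, exists h a, (h <= H)%MS /\ w = h + a *: u.
  move=> w; have /sub_addsmxP [[D1 D2] /= E] := full _ w.
  exists (D1 *m H), (D2 0 0); split; first exact: submxMl.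
  by rewrite E {1}(mx11_scalar D2) mul_scalar_mx.
set G := fun y : 'rV[K]_n => y^T *m u + u^T *m y.
have GL : forall a x y, G (a *: x + y) = a *: G x + G y.
  move=> a x y; rewrite /G linearD linearZ /= mulmxDl mulmxDr -scalemxAl -scalemxAr.
  by rewrite scalerDr addrACA.
have Thh : forall h : 'rV[K]_n, (h <= H)%MS -> lspan gen (h^T *m h).
  move=> h hH; apply: TH.
  have E : (h^T *m h)^T = h^T *m h by rewrite trmx_mul trmxK.
  do !split => //; rewrite ?E; exact: submx_trans (submxMl _ _) hH.
have Gw : forall w, S w -> ~ (w <= H)%MS -> lspan gen (G w).
  move=> w Sw wH; have [h [a [hH Ew]]] := dec w.
  have a0 : a != 0.
    by apply/eqP => a0; apply: wH; rewrite Ew a0 scale0r addr0.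
  have E1 : w^T *m w - h^T *m h = a *: (h^T *m u + u^T *m h + a *: (u^T *m u)).
    by rewrite Ew [(h + _)^T]linearD linearZ /= !mulmxDl !mulmxDr -!scalemxAl -!scalemxAr;
    rewrite -[h^T *m h + _ + _]addrA [h^T *m h + _]addrC addrK !scalerDr addrA.
  have -> : G w = a^-1 *: (w^T *m w - h^T *m h) + a *: (u^T *m u).
    rewrite E1 scalerA mulVf // scale1r /G Ew [(h + _)^T]linearD linearZ /= mulmxDl mulmxDr.
    rewrite -scalemxAl -scalemxAr addrACA -!addrA; congr (_ + _); by rewrite addrC.
  apply: lspanD; apply: lspanZ; last by apply: lspan1; exists u.
  by apply: lspanB; [apply: lspan1; exists w | apply: Thh].
have Gall : forall y, lspan gen (G y).
  move=> y; have /in_spanE [l [Hl ->]] := hspan y.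
  elim: l Hl => [|p l IH] Hl.
    rewrite big_nil /G linear0 mul0mx mulmx0 addr0; exact: lspan0.
  rewrite big_cons GL; apply: lspanD.
    apply: lspanZ; have [Sp pH] := Hl p (mem_head _ _); exact: Gw.
  by apply: IH => q ql; apply: Hl; rewrite inE ql orbT.
move=> M [HMT _]; apply (proj2 (in_spanE _ _)).
have /sub_addsmxP [[D1 c] /= E] := full _ (1%:M : 'M[K]_n).
have [Q QH {}E] : exists2 Q, (Q <= H)%MS & 1%:M = Q + c *m u.
  by exists (D1 *m H) => //; apply: submxMl.
clear D1.
set y := c^T *m M *m Q.
have yT : y^T = Q^T *m M *m c by rewrite /y !trmx_mul trmxK HMT mulmxA.
pose k : K := (c^T *m M *m c) 0 0.
have Ek : c^T *m M *m c = k%:M by apply: mx11_scalar.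
have -> : M = Q^T *m M *m Q + G y + k *: (u^T *m u).
  rewrite {1}(_ : M = (Q + c *m u)^T *m M *m (Q + c *m u)); last first.
    by rewrite -E trmx1 mul1mx mulmx1.
  rewrite [(Q + _)^T]linearD /= [(c *m u)^T]trmx_mul !mulmxDl !mulmxDr !mulmxA.
  have D : k *: (u^T *m u) = u^T *m c^T *m M *m c *m u.
    by rewrite scalemxAr -mul_scalar_mx -Ek !mulmxA.
  by rewrite D /G yT /y !mulmxA !addrA.
apply: lspanD; last by apply: lspanZ; apply: lspan1; exists u.
apply: lspanD => //; apply: TH.
have A1 : (Q^T *m M *m Q)^T = Q^T *m M *m Q by rewrite !trmx_mul trmxK HMT mulmxA.
do !split => //; rewrite ?A1; exact: submx_trans (submxMl _ _) QH.
Qed.
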